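(* Let $(\varGamma,C)$ be a split-step SUSYQW with coin $C(x)=C(\mathrm R)$ for $x\ge1$ and $C(x)=C(\mathrm L)$ for $x\le0$, where $C(\mathrm L),C(\mathrm R)$ are nontrivial and $b(\mathrm L)\ne0\ne b(\mathrm R)$ (Type III). Let $\Phi_\pm:\mathbb Z\to\mathbb C^2$ satisfy $\Phi_\pm(x+1)=A_\pm(x)\Phi_\pm(x)$ for all $x\in\mathbb Z$, and put $(k_{\pm,1},k_{\pm,2})^{\mathrm T}:=P_\pm(\mathrm L)^{-1}\Phi_\pm(0)$. Then $\sum_{x\in\mathbb Z}\|\Phi_\pm(x)\|^2<\infty$ if and only if for each $j=1,2$, \[ |k_{\pm,j}|^2\sum_{x\in\mathbb N}\Big(|z_{\pm,j}(\mathrm L)|^{-2x}+|z_{\pm,j}(\mathrm R)|^{2x}\Big)<\infty. \] Moreover: $|z_{+,1}(\mathrm L)|^{-1}<1$ and $|z_{+,1}(\mathrm R)|<1$ iff $a(\mathrm L)<-p<a(\mathrm R)$; $|z_{+,2}(\mathrm L)|^{-1}<1$ and $|z_{+,2}(\mathrm R)|<1$ iff $a(\mathrm R)<p<a(\mathrm L)$; $|z_{-,1}(\mathrm L)|^{-1}<1$ and $|z_{-,1}(\mathrm R)|<1$ iff $a(\mathrm R)<-p<a(\mathrm L)$; $|z_{-,2}(\mathrm L)|^{-1}<1$ and $|z_{-,2}(\mathrm R)|<1$ iff $a(\mathrm L)<p<a(\mathrm R)$. Finally, $\dim\ker Q_{\epsilon_\pm}\le1$.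
   Context: Let $L$ be the left shift $(L\Psi)(x)=\Psi(x+1)$ on $\ell^2(\mathbb Z)$. A split-step SUSYQW is $\varGamma=\begin{pmatrix} p & qL\\ \overline{q}L^* & -p\end{pmatrix}$, $C=\begin{pmatrix} a_1 & \overline{b}\\ b & a_2\end{pmatrix}$ on $\ell^2(\mathbb Z)\oplus\ell^2(\mathbb Z)$ with $p\in\mathbb R$, $q\in\mathbb C\setminus\{0\}$, $p^2+|q|^2=1$, $\theta=\operatorname{Arg}q$, real sequences $a_1,a_2$ and complex sequence $b$ with $a_j(x)^2+|b(x)|^2=1$, $b(x)(a_1(x)+a_2(x))=0$. $C(x)=\begin{pmatrix} a_1(x)&\overline{b(x)}\\ b(x)&a_2(x)\end{pmatrix}$; a nontrivial (i.e. $\ne\pm I$) limit $C(\sharp)$ has $a_1(\sharp)=-a_2(\sharp)=:a(\sharp)$, $a(\sharp)^2+|b(\sharp)|^2=1$. Define $\alpha_\pm(x)=(1\pm p)e^{i\theta}b(x)$, $\beta(x)=|q|(a_2(x+1)-a_1(x))$, and $A_\pm(x)=\begin{pmatrix}\mp\beta(x)/\alpha_\pm(x+1)&\overline{\alpha_\mp(x)}/\alpha_\pm(x+1)\\1&0\end{pmatrix}$. For $\sharp\in\{\mathrm L,\mathrm R\}$: $z_{\pm,j}(\sharp)=\frac{\overline q}{1\pm p}\cdot\frac{(-1)^j\pm a(\sharp)}{b(\sharp)}$ ($j=1,2$) and $P_\pm(\sharp)=\begin{pmatrix}z_{\pm,1}(\sharp)&z_{\pm,2}(\sharp)\\1&1\end{pmatrix}$.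 $Q_{\epsilon_\pm}$ are the operators on $\ell^2(\mathbb Z)$ given by $-2iQ_{\epsilon_\pm}=(1\pm p)e^{i\theta}Lb-(1\mp p)e^{-i\theta}\overline{b}L^*\pm|q|(a_2(\cdot+1)-a_1)$. $\mathbb N=\{1,2,\dots\}$; an open interval $(s,t)$ with $s\ge t$ is empty. *)

(* Defs.v *)
From Stdlib Require Import Reals ZArith Lra Lia.
Open Scope R_scope.

Record Cx := mkC { Re : R; Im : R }.

Definition RtoC (r : R) : Cx := mkC r 0.
Definition C0 : Cx := RtoC 0.
Definition C1 : Cx := RtoC 1.
Definition Ci : Cx := mkC 0 1.
Definition Cadd (z w : Cx) : Cx := mkC (Re z + Re w) (Im z + Im w).
Definition Copp (z : Cx) : Cx := mkC (- Re z) (- Im z).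
Definition Csub (z w : Cx) : Cx := Cadd z (Copp w).
Definition Cmul (z w : Cx) : Cx :=
  mkC (Re z * Re w - Im z * Im w) (Re z * Im w + Im z * Re w).
Definition Cconj (z : Cx) : Cx := mkC (Re z) (- Im z).
Definition Cnorm2 (z : Cx) : R := Re z * Re z + Im z * Im z.
Definition Cabs (z : Cx) : R := sqrt (Cnorm2 z).
Definition Cinv (z : Cx) : Cx := mkC (Re z / Cnorm2 z) (- Im z / Cnorm2 z).
Definition Cdiv (z w : Cx) : Cx := Cmul z (Cinv w).
Definition Cscale (r : R) (z : Cx) : Cx := mkC (r * Re z) (r * Im z).

(* e^{i Arg q} for q <> 0, i.e. q / |q| *)
Definition expiArg (q : Cx) : Cx := Cscale (/ Cabs q) q.

Record M2 := mkM2 { m11 : Cx; m12 : Cx; m21 : Cx; m22 : Cx }.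
Definition C2 := (Cx * Cx)%type.
Definition M2app (M : M2) (v : C2) : C2 :=
  (Cadd (Cmul (m11 M) (fst v)) (Cmul (m12 M) (snd v)),
   Cadd (Cmul (m21 M) (fst v)) (Cmul (m22 M) (snd v))).
Definition M2det (M : M2) : Cx := Csub (Cmul (m11 M) (m22 M)) (Cmul (m12 M) (m21 M)).
Definition M2inv (M : M2) : M2 :=
  let d := M2det M in
  mkM2 (Cdiv (m22 M) d) (Cdiv (Copp (m12 M)) d)
       (Cdiv (Copp (m21 M)) d) (Cdiv (m11 M) d).

(* sum_{x in Z} f x < oo, for nonnegative f: symmetric partial sums are bounded *)
Definition summable_Z (f : Z -> R) : Prop :=
  exists M : R, forall n : nat,
    sum_f_R0 (fun m => f (Z.of_nat m - Z.of_nat n)%Z) (2 * n) <= M.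
(* sum_{x in N = {1,2,...}} g x < oo, for nonnegative g: partial sums bounded *)
Definition summable_N (g : nat -> R) : Prop :=
  exists M : R, forall n : nat, sum_f_R0 (fun m => g (S m)) n <= M.

Definition C2norm2 (v : C2) : R := Cnorm2 (fst v) + Cnorm2 (snd v).

(* signs: sg = true stands for "+", sg = false for "-" *)
Definition sgn (sg : bool) : R := if sg then 1 else -1.

Definition alpha (p : R) (q : Cx) (b : Z -> Cx) (sg : bool) (x : Z) : Cx :=
  Cmul (Cscale (1 + sgn sg * p) (expiArg q)) (b x).

Definition beta (q : Cx) (a1 a2 : Z -> R) (x : Z) : R :=
  Cabs q * (a2 (x + 1)%Z - a1 x).

Definition Amat (p : R) (q : Cx) (a1 a2 : Z -> R) (b : Z -> Cx) (sg : bool) (x : Z) : M2 :=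
  let den := alpha p q b sg (x + 1)%Z in
  mkM2 (Cdiv (RtoC (- sgn sg * beta q a1 a2 x)) den)
       (Cdiv (Cconj (alpha p q b (negb sg) x)) den)
       C1 C0.

(* z_{+-,j}(#) = conj(q)/(1 +- p) * ((-1)^j +- a(#)) / b(#),  for a side # with
   limit coin data a(#), b(#) *)
Definition zz (p : R) (q : Cx) (sg : bool) (j : nat) (a : R) (bs : Cx) : Cx :=
  Cmul (Cscale (/ (1 + sgn sg * p)) (Cconj q))
       (Cdiv (RtoC ((-1) ^ j + sgn sg * a)) bs).

Definition Pmat (p : R) (q : Cx) (sg : bool) (a : R) (bs : Cx) : M2 :=
  mkM2 (zz p q sg 1 a bs) (zz p q sg 2 a bs) C1 C1.

Definition C2comp (j : nat) (v : C2) : Cx := if Nat.eqb j 1 then fst v else snd v.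

(* -2i Q_{eps_{+-}} psi, as an operator on sequences Z -> Cx:
   (1+-p) e^{i theta} (L b psi)(x) - (1-+p) e^{-i theta} conj(b(x)) (L^* psi)(x)
   +- |q| (a2(x+1) - a1(x)) psi(x),
   with (L psi)(x) = psi(x+1), (L^* psi)(x) = psi(x-1). *)
Definition m2iQ (p : R) (q : Cx) (a1 a2 : Z -> R) (b : Z -> Cx) (sg : bool)
  (psi : Z -> Cx) (x : Z) : Cx :=
  Cadd (Csub (Cmul (Cscale (1 + sgn sg * p) (expiArg q)) (Cmul (b (x + 1)%Z) (psi (x + 1)%Z)))
             (Cmul (Cscale (1 - sgn sg * p) (Cconj (expiArg q))) (Cmul (Cconj (b x)) (psi (x - 1)%Z))))
       (Cscale (sgn sg * Cabs q * (a2 (x + 1)%Z - a1 x)) (psi x)).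

Definition Qeps (p : R) (q : Cx) (a1 a2 : Z -> R) (b : Z -> Cx) (sg : bool)
  (psi : Z -> Cx) (x : Z) : Cx :=
  Cmul (Cscale (/ 2) Ci) (m2iQ p q a1 a2 b sg psi x).

Definition l2Z (psi : Z -> Cx) : Prop := summable_Z (fun x => Cnorm2 (psi x)).

Definition dim_ker_le1 (Q : (Z -> Cx) -> Z -> Cx) : Prop :=
  forall psi1 psi2 : Z -> Cx,
    l2Z psi1 -> l2Z psi2 ->
    (forall x, Q psi1 x = C0) -> (forall x, Q psi2 x = C0) ->
    exists c1 c2 : Cx, (c1 <> C0 \/ c2 <> C0) /\
      forall x, Cadd (Cmul c1 (psi1 x)) (Cmul c2 (psi2 x)) = C0.

(* Main.v *)
Require Import Defs.
From Stdlib Require Import Reals ZArith.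
From Stdlib Require Import Lra Lia Field.
Import Defs.
Open Scope R_scope.

Lemma Cx_ext z w : Re z = Re w -> Im z = Im w -> z = w.
Proof. destruct z, w; simpl; intros; subst; reflexivity. Qed.

Ltac cxe := repeat match goal with z : Cx |- _ => destruct z end;
  unfold Cadd, Cmul, Copp, Csub, C0, C1, RtoC, Cconj, Cscale in *; simpl in *.

Lemma Cx_ring : ring_theory C0 C1 Cadd Cmul Csub Copp (@eq Cx).
Proof.
  constructor; intros; cxe; apply Cx_ext; simpl; ring.
Qed.

Lemma Cnorm2_ge0 z : 0 <= Cnorm2 z.
Proof. unfold Cnorm2; nra. Qed.

Lemma Cnorm2_eq0 z : Cnorm2 z = 0 -> z = C0.
Proof. unfold Cnorm2; intro H; destruct z as [x y]; simpl in *.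
  assert (x = 0) by nra. assert (y = 0) by nra. subst; reflexivity. Qed.

Lemma Cnorm2_pos z : z <> C0 -> 0 < Cnorm2 z.
Proof. intro H. destruct (Cnorm2_ge0 z) as [h|h]; auto. symmetry in h. now apply Cnorm2_eq0 in h. Qed.

Lemma C1_neq_C0 : C1 <> C0.
Proof. intro H. injection H. lra. Qed.

Lemma Cx_field : field_theory C0 C1 Cadd Cmul Csub Copp Cdiv Cinv (@eq Cx).
Proof.
  constructor.
  - exact Cx_ring.
  - exact C1_neq_C0.
  - reflexivity.
  - intros z Hz. pose proof (Cnorm2_pos z Hz) as Hp.
    destruct z as [x y]; unfold Cinv, Cnorm2, Cmul, C1, RtoC in *; simpl in *.
    apply Cx_ext; simpl; field; lra.
Qed.

Add Field Cxfield : Cx_field.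


Lemma RtoC_add a b : RtoC (a+b) = Cadd (RtoC a) (RtoC b).
Proof. apply Cx_ext; simpl; ring. Qed.
Lemma RtoC_mul a b : RtoC (a*b) = Cmul (RtoC a) (RtoC b).
Proof. apply Cx_ext; simpl; ring. Qed.
Lemma RtoC_opp a : RtoC (-a) = Copp (RtoC a).
Proof. apply Cx_ext; simpl; ring. Qed.
Lemma RtoC_sub a b : RtoC (a-b) = Csub (RtoC a) (RtoC b).
Proof. apply Cx_ext; simpl; ring. Qed.
Lemma RtoC_m1 : RtoC (-1) = Copp C1.
Proof. apply Cx_ext; simpl; ring. Qed.
Lemma RtoC_1 : RtoC 1 = C1. Proof. reflexivity. Qed.
Lemma RtoC_0 : RtoC 0 = C0. Proof. reflexivity. Qed.
Lemma RtoC_neq a : a <> 0 -> RtoC a <> C0.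
Proof. intros H E; injection E; auto. Qed.
Lemma RtoC_inv a : a <> 0 -> RtoC (/a) = Cinv (RtoC a).
Proof. intros H. apply Cx_ext; unfold Cinv, Cnorm2; simpl; field; auto. Qed.
Lemma Cscale_eq r z : Cscale r z = Cmul (RtoC r) z.
Proof. apply Cx_ext; simpl; ring. Qed.
Lemma Cconj_mul a b : Cconj (Cmul a b) = Cmul (Cconj a) (Cconj b).
Proof. apply Cx_ext; simpl; ring. Qed.
Lemma Cconj_RtoC a : Cconj (RtoC a) = RtoC a.
Proof. apply Cx_ext; simpl; ring. Qed.
Lemma Cmul_conj z : Cmul z (Cconj z) = RtoC (Cnorm2 z).
Proof. apply Cx_ext; unfold Cnorm2; simpl; ring. Qed.
Lemma Cconj_eq z : z <> C0 -> Cconj z = Cdiv (RtoC (Cnorm2 z)) z.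
Proof. intro H. rewrite <- Cmul_conj. field. auto. Qed.

Lemma Cnorm2_mul a b : Cnorm2 (Cmul a b) = Cnorm2 a * Cnorm2 b.
Proof. destruct a, b; unfold Cnorm2; simpl; ring. Qed.
Lemma Cnorm2_RtoC a : Cnorm2 (RtoC a) = a * a.
Proof. unfold Cnorm2; simpl; ring. Qed.
Lemma Cnorm2_conj a : Cnorm2 (Cconj a) = Cnorm2 a.
Proof. unfold Cnorm2; simpl; ring. Qed.
Lemma Cnorm2_inv a : a <> C0 -> Cnorm2 (Cinv a) = / Cnorm2 a.
Proof. intro H. pose proof (Cnorm2_pos a H). destruct a as [x y]; unfold Cinv, Cnorm2 in *; simpl in *. field. lra. Qed.
Lemma Cnorm2_div a b : b <> C0 -> Cnorm2 (Cdiv a b) = Cnorm2 a / Cnorm2 b.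
Proof. intro H. unfold Cdiv. rewrite Cnorm2_mul, Cnorm2_inv; auto. Qed.
Lemma Cnorm2_scale r a : Cnorm2 (Cscale r a) = r * r * Cnorm2 a.
Proof. unfold Cnorm2; simpl; ring. Qed.

Lemma Cabs_sq q : Cabs q * Cabs q = Cnorm2 q.
Proof. unfold Cabs. apply sqrt_sqrt, Cnorm2_ge0. Qed.
Lemma Cabs_pos q : q <> C0 -> 0 < Cabs q.
Proof. intro H. unfold Cabs. apply sqrt_lt_R0, Cnorm2_pos; auto. Qed.

Lemma sgn_sq sg : sgn sg * sgn sg = 1.
Proof. destruct sg; simpl; ring. Qed.

Ltac neqR := let E := fresh in intro E; apply (f_equal Re) in E; simpl in E;
  repeat match goal with b : bool |- _ => destruct b end; simpl in *; nra.
Ltac pushC := repeat (rewrite ?RtoC_add, ?RtoC_mul, ?RtoC_opp, ?RtoC_sub, ?Cscale_eq,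
   ?Cconj_mul, ?Cconj_RtoC, ?RtoC_m1, ?RtoC_1, ?RtoC_0).

Lemma bridge sg j p q aX bX aY a2Y bY :
  (j = 1 \/ j = 2)%nat -> q <> C0 -> p^2 + Cnorm2 q = 1 ->
  aX^2 + Cnorm2 bX = 1 -> bX <> C0 -> bY <> C0 -> a2Y = - aY ->
  Cadd (Cmul (Cdiv (RtoC (- sgn sg * (Cabs q * (a2Y - aX)))) (Cmul (Cscale (1 + sgn sg * p) (expiArg q)) bY)) (zz p q sg j aX bX))
       (Cdiv (Cconj (Cmul (Cscale (1 + sgn (negb sg) * p) (expiArg q)) bX)) (Cmul (Cscale (1 + sgn sg * p) (expiArg q)) bY))
  = Cmul (zz p q sg j aX bX) (zz p q sg j aY bY).
Proof.
  intros Hj Hq Hpq HX HbX HbY Ha2.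
  pose proof (Cabs_pos q Hq) as Ht. pose proof (Cabs_sq q) as Ht2.
  pose proof (Cnorm2_pos q Hq) as Hn.
  assert (Hu : 1 + sgn sg * p <> 0) by (destruct sg; simpl; nra).
  assert (Hv : 1 - sgn sg * p <> 0) by (destruct sg; simpl; nra).
  subst a2Y.
  unfold zz, expiArg.
  set (t := Cabs q) in *.
  assert (E1 : Cdiv (RtoC (- sgn sg * (t * (- aY - aX)))) (Cmul (Cscale (1 + sgn sg * p) (Cscale (/ t) q)) bY)
     = Cdiv (RtoC (sgn sg * (t * t) * (aY + aX))) (Cmul (Cmul (RtoC (1 + sgn sg * p)) q) bY)).
  { rewrite !Cscale_eq. rewrite (RtoC_inv t) by lra.
    pushC. field.
    repeat split; auto; neqR. }
  rewrite E1. rewrite Ht2. replace (Cnorm2 q) with (1 - p^2) by lra.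
  pushC. rewrite (Cconj_eq q Hq), (Cconj_eq bX HbX).
  replace (Cnorm2 bX) with (1 - aX^2) by lra.
  replace (Cnorm2 q) with (1 - p^2) by lra.
  rewrite !(RtoC_inv t) by lra.
  destruct sg, Hj as [-> | ->]; simpl in *; rewrite !(RtoC_inv) by lra; pushC.
  all: field; repeat split; auto; try neqR.
Qed.

Definition bnd (f : nat -> R) : Prop := exists M, forall n, sum_f_R0 f n <= M.

Lemma sum_nonneg f n : (forall m, 0 <= f m) -> 0 <= sum_f_R0 f n.
Proof. intros; apply cond_pos_sum; auto. Qed.

Lemma sum_mono f n : (forall m, 0 <= f m) -> sum_f_R0 f n <= sum_f_R0 f (S n).
Proof. intros H. rewrite tech5. specialize (H (S n)). lra. Qed.

Lemma bnd_le f g : (forall m, f m <= g m) -> bnd g -> bnd f.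
Proof. intros H [M HM]. exists M. intro n. eapply Rle_trans; [apply sum_Rle|apply HM]. intros; auto. Qed.

Lemma bnd_add f g : bnd f -> bnd g -> bnd (fun m => f m + g m).
Proof. intros [M1 H1] [M2 H2]. exists (M1+M2). intro n. rewrite plus_sum. specialize (H1 n); specialize (H2 n); lra. Qed.

Lemma bnd_scal c f : bnd f -> 0 <= c -> bnd (fun m => c * f m).
Proof. intros [M H] Hc. exists (c*M). intro n.
  replace (sum_f_R0 (fun m => c * f m) n) with (c * sum_f_R0 f n).
  - apply Rmult_le_compat_l; auto.
  - rewrite scal_sum. apply sum_eq; intros; ring. Qed.

Lemma bnd_add_inv f g : (forall m, 0 <= f m) -> (forall m, 0 <= g m) ->
  bnd (fun m => f m + g m) -> bnd f /\ bnd g.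
Proof. intros Hf Hg H. split; eapply bnd_le; eauto; intro m; simpl;
  specialize (Hf m); specialize (Hg m); lra. Qed.

Lemma geom_bnd K t : 0 <= K -> 0 <= t -> (bnd (fun m => K * t ^ m) <-> K = 0 \/ t < 1).
Proof.
  intros HK Ht. split.
  - intros [M HM]. destruct (Req_dec K 0) as [E|E]; [left; auto|right].
    destruct (Rlt_le_dec t 1) as [h|h]; auto. exfalso.
    assert (HK' : 0 < K) by lra.
    destruct (INR_archimed K M HK') as [n Hn].
    specialize (HM n).
    assert (sum_f_R0 (fun _ => K) n <= sum_f_R0 (fun m => K * t ^ m) n).
    { apply sum_Rle. intros. pose proof (pow_R1_Rle t n0 h). nra. }
    rewrite sum_cte in H. rewrite S_INR in H. lra.
  - intros [E|E].
    + exists 0. intro n. subst. replace (sum_f_R0 (fun m => 0 * t ^ m) n) with (sum_f_R0 (fun _ => 0) n).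
      rewrite sum_cte; lra. apply sum_eq; intros; ring.
    + exists (K * (1 / (1 - t))). intro n.
      replace (sum_f_R0 (fun m => K * t ^ m) n) with (K * sum_f_R0 (fun m => t ^ m) n).
      * rewrite tech3 by lra. pose proof (pow_le t (S n) Ht).
        apply Rmult_le_compat_l; auto. unfold Rdiv. apply Rmult_le_compat_r.
        { apply Rlt_le, Rinv_0_lt_compat; lra. } lra.
      * rewrite scal_sum. apply sum_eq; intros; ring.
Qed.

Lemma geomS_bnd K t : 0 <= K -> 0 < t -> (bnd (fun m => K * t ^ (S m)) <-> K = 0 \/ t < 1).
Proof.
  intros HK Ht.
  assert (E : bnd (fun m => K * t ^ (S m)) <-> bnd (fun m => (K * t) * t ^ m)).
  { split; apply bnd_le; intro; simpl; lra. }
  rewrite E, geom_bnd by nra. split; intros [h|h]; auto.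
  left. destruct (Rmult_integral _ _ h); lra.
  left; subst; ring.
Qed.

Definition sumZ (f : Z -> R) n := sum_f_R0 (fun m => f (Z.of_nat m - Z.of_nat n)%Z) (2 * n).
Definition Lsum (f : Z -> R) n := sum_f_R0 (fun m => f (- Z.of_nat m)%Z) n.
Definition Rsum (f : Z -> R) n := sum_f_R0 (fun m => f (Z.of_nat (S m))) n.

Lemma sumZ_S f n : sumZ f (S n) = f (- Z.of_nat (S n))%Z + sumZ f n + f (Z.of_nat (S n)).
Proof.
  unfold sumZ. replace (2 * S n)%nat with (S (S (2 * n))) by lia.
  rewrite tech5. rewrite decomp_sum by lia. simpl Init.Nat.pred.
  replace (Z.of_nat (S (S (2 * n))) - Z.of_nat (S n))%Z with (Z.of_nat (S n)) by lia.
  replace (Z.of_nat 0 - Z.of_nat (S n))%Z with (- Z.of_nat (S n))%Z by lia.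
  rewrite (sum_eq _ (fun m => f (Z.of_nat m - Z.of_nat n)%Z)). replace (n + (n + 0))%nat with (2 * n)%nat by lia. ring.
  intros. f_equal. lia.
Qed.

Lemma sumZ_split f n : sumZ f (S n) = Lsum f (S n) + Rsum f n.
Proof.
  induction n.
  - rewrite sumZ_S. unfold sumZ, Lsum, Rsum. simpl. ring.
  - rewrite sumZ_S, IHn. unfold Lsum, Rsum. rewrite (tech5 _ (S n)), (tech5 _ n). rewrite (tech5 (fun m => f (Z.of_nat (S m))) n). ring.
Qed.

Lemma summable_Z_iff f : (forall x, 0 <= f x) ->
  (summable_Z f <-> bnd (fun m => f (- Z.of_nat m)%Z) /\ bnd (fun m => f (Z.of_nat (S m)))).
Proof.
  intros Hf. assert (Hs: summable_Z f <-> exists M, forall n, sumZ f n <= M) by (unfold summable_Z, sumZ; tauto).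
  rewrite Hs. split.
  - intros [M HM]. split.
    + exists M. intro n. fold (Lsum f n). specialize (HM (S n)). rewrite sumZ_split in HM.
      assert (0 <= Rsum f n) by (apply sum_nonneg; auto).
      assert (Lsum f n <= Lsum f (S n)) by (apply sum_mono; auto). lra.
    + exists M. intro n. fold (Rsum f n). specialize (HM (S n)). rewrite sumZ_split in HM.
      assert (0 <= Lsum f (S n)) by (apply sum_nonneg; auto). lra.
  - intros [[M1 H1] [M2 H2]]. exists (M1 + M2). intros [|n].
    + unfold sumZ. simpl. specialize (H1 0%nat). specialize (H2 0%nat). simpl in *.
      pose proof (Hf 1%Z). lra.
    + rewrite sumZ_split. specialize (H1 (S n)); specialize (H2 n). unfold Lsum, Rsum. lra.
Qed.

Fixpoint Cpow (z : Cx) (n : nat) : Cx :=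
  match n with O => C1 | S k => Cmul (Cpow z k) z end.

Lemma Cnorm2_pow z n : Cnorm2 (Cpow z n) = Cnorm2 z ^ n.
Proof. induction n; simpl. unfold Cnorm2; simpl; ring. rewrite Cnorm2_mul, IHn; ring. Qed.

Lemma Cnorm2_add_le a b : Cnorm2 (Cadd a b) <= 2 * Cnorm2 a + 2 * Cnorm2 b.
Proof. destruct a as [x y], b as [u v]; unfold Cnorm2; simpl.
  pose proof (pow2_ge_0 (x - u)); pose proof (pow2_ge_0 (y - v)). nra. Qed.
Lemma Cnorm2_sub_le a b : Cnorm2 (Csub a b) <= 2 * Cnorm2 a + 2 * Cnorm2 b.
Proof. destruct a as [x y], b as [u v]; unfold Cnorm2; simpl.
  pose proof (pow2_ge_0 (x + u)); pose proof (pow2_ge_0 (y + v)). nra. Qed.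

Lemma Cmul_neq0 a b : a <> C0 -> b <> C0 -> Cmul a b <> C0.
Proof. intros Ha Hb E. apply Hb. replace b with (Cmul (Cinv a) (Cmul a b)) by (field; auto).
  rewrite E. field; auto. Qed.

Lemma Csub_neq0 a b : a <> b -> Csub a b <> C0.
Proof. intros H E. apply H. replace a with (Cadd (Csub a b) b) by ring. rewrite E. ring. Qed.

Definition Vm (y1 y2 c1 c2 r1 r2 : Cx) (m : nat) : C2 :=
  (Cadd (Cmul (Cmul c1 (Cpow r1 m)) y1) (Cmul (Cmul c2 (Cpow r2 m)) y2),
   Cadd (Cmul c1 (Cpow r1 m)) (Cmul c2 (Cpow r2 m))).

Lemma extract_bound (A B y1 y2 : Cx) : y1 <> y2 ->
  Cnorm2 A <= (2 + 2 * Cnorm2 y2) / Cnorm2 (Csub y1 y2) *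
     C2norm2 (Cadd (Cmul A y1) (Cmul B y2), Cadd A B).
Proof.
  intros H. pose proof (Cnorm2_pos _ (Csub_neq0 _ _ H)) as Hd.
  assert (E : Cmul A (Csub y1 y2) = Csub (Cadd (Cmul A y1) (Cmul B y2)) (Cmul y2 (Cadd A B))) by ring.
  pose proof (Cnorm2_sub_le (Cadd (Cmul A y1) (Cmul B y2)) (Cmul y2 (Cadd A B))) as L.
  rewrite <- E, !Cnorm2_mul in L. unfold C2norm2; simpl.
  set (u := Cnorm2 (Cadd (Cmul A y1) (Cmul B y2))) in *.
  set (v := Cnorm2 (Cadd A B)) in *.
  assert (0 <= u) by apply Cnorm2_ge0.
  assert (0 <= v) by apply Cnorm2_ge0.
  assert (0 <= Cnorm2 y2) by apply Cnorm2_ge0.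
  apply (Rmult_le_reg_r (Cnorm2 (Csub y1 y2))); auto.
  unfold Rdiv. replace ((2 + 2 * Cnorm2 y2) * / Cnorm2 (Csub y1 y2) * (u + v) * Cnorm2 (Csub y1 y2))
    with ((2 + 2 * Cnorm2 y2) * (u + v)) by (field; lra).
  nra.
Qed.

Lemma two_modes y1 y2 c1 c2 r1 r2 : y1 <> y2 ->
  (bnd (fun m => C2norm2 (Vm y1 y2 c1 c2 r1 r2 m)) <->
   bnd (fun m => Cnorm2 c1 * Cnorm2 r1 ^ m) /\ bnd (fun m => Cnorm2 c2 * Cnorm2 r2 ^ m)).
Proof.
  intros H. split.
  - intros Hb. split.
    + apply (bnd_le _ (fun m => (2 + 2 * Cnorm2 y2) / Cnorm2 (Csub y1 y2) * C2norm2 (Vm y1 y2 c1 c2 r1 r2 m))).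
      * intro m. rewrite <- Cnorm2_pow, <- Cnorm2_mul. unfold Vm. apply extract_bound; auto.
      * apply bnd_scal; auto. pose proof (Cnorm2_pos _ (Csub_neq0 _ _ H)).
        pose proof (Cnorm2_ge0 y2). apply Rle_mult_inv_pos; lra.
    + apply (bnd_le _ (fun m => (2 + 2 * Cnorm2 y1) / Cnorm2 (Csub y2 y1) * C2norm2 (Vm y1 y2 c1 c2 r1 r2 m))).
      * intro m. rewrite <- Cnorm2_pow, <- Cnorm2_mul. unfold Vm.
        replace (C2norm2 _) with (C2norm2 (Cadd (Cmul (Cmul c2 (Cpow r2 m)) y2) (Cmul (Cmul c1 (Cpow r1 m)) y1),
          Cadd (Cmul c2 (Cpow r2 m)) (Cmul c1 (Cpow r1 m)))).
        apply extract_bound; auto. unfold C2norm2; simpl. f_equal; f_equal; ring.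
      * apply bnd_scal; auto. assert (y2 <> y1) by auto. pose proof (Cnorm2_pos _ (Csub_neq0 _ _ H0)).
        pose proof (Cnorm2_ge0 y1). apply Rle_mult_inv_pos; lra.
  - intros [H1 H2].
    apply (bnd_le _ (fun m => (2 * Cnorm2 y1 + 2) * (Cnorm2 c1 * Cnorm2 r1 ^ m) + (2 * Cnorm2 y2 + 2) * (Cnorm2 c2 * Cnorm2 r2 ^ m))).
    + intro m. unfold Vm, C2norm2; simpl.
      pose proof (Cnorm2_add_le (Cmul (Cmul c1 (Cpow r1 m)) y1) (Cmul (Cmul c2 (Cpow r2 m)) y2)).
      pose proof (Cnorm2_add_le (Cmul c1 (Cpow r1 m)) (Cmul c2 (Cpow r2 m))).
      rewrite !Cnorm2_mul, !Cnorm2_pow in *. lra.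
    + apply bnd_add; apply bnd_scal; auto; pose proof (Cnorm2_ge0 y1); pose proof (Cnorm2_ge0 y2); lra.
Qed.

Lemma Cnorm2_pos_neq z : 0 < Cnorm2 z -> z <> C0.
Proof. intros H E; subst; unfold Cnorm2 in H; simpl in H; lra. Qed.

Lemma pow_m1_sq j : (j = 1 \/ j = 2)%nat -> (-1) ^ j * (-1) ^ j = 1.
Proof. intros [-> | ->]; simpl; ring. Qed.

Lemma zz_norm p q sg j a bs : p ^ 2 + Cnorm2 q = 1 -> bs <> C0 -> 1 + sgn sg * p <> 0 ->
  Cnorm2 (zz p q sg j a bs) = (1 - p ^ 2) * (((-1) ^ j + sgn sg * a) * ((-1) ^ j + sgn sg * a))
     / ((1 + sgn sg * p) * (1 + sgn sg * p) * Cnorm2 bs).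
Proof.
  intros Hpq Hb Hu. pose proof (Cnorm2_pos _ Hb).
  unfold zz. rewrite Cnorm2_mul, Cnorm2_scale, Cnorm2_conj, Cnorm2_div, Cnorm2_RtoC by auto.
  replace (Cnorm2 q) with (1 - p^2) by lra. field. lra.
Qed.

Lemma zz_pos p q sg j a bs : (j = 1 \/ j = 2)%nat -> p ^ 2 + Cnorm2 q = 1 -> q <> C0 ->
  a ^ 2 + Cnorm2 bs = 1 -> bs <> C0 -> 0 < Cnorm2 (zz p q sg j a bs).
Proof.
  intros Hj Hpq Hq Ha Hb. pose proof (Cnorm2_pos _ Hb). pose proof (Cnorm2_pos _ Hq).
  assert (Hu : 1 + sgn sg * p <> 0) by (destruct sg; simpl; nra).
  rewrite zz_norm by auto.
  assert (((-1) ^ j + sgn sg * a) <> 0) by (destruct sg, Hj as [-> | ->]; simpl; nra).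
  apply Rdiv_lt_0_compat. apply Rmult_lt_0_compat. nra.
  apply Rsqr_pos_lt; auto. apply Rmult_lt_0_compat; auto. apply Rsqr_pos_lt; auto.
Qed.

Lemma zz_diff p q sg a bs : p ^ 2 + Cnorm2 q = 1 -> q <> C0 -> bs <> C0 ->
  zz p q sg 1 a bs <> zz p q sg 2 a bs.
Proof.
  intros Hpq Hq Hb E. pose proof (Cnorm2_pos _ Hb). pose proof (Cnorm2_pos _ Hq).
  assert (Hu : 1 + sgn sg * p <> 0) by (destruct sg; simpl; nra).
  assert (D : Csub (zz p q sg 1 a bs) (zz p q sg 2 a bs) = Cmul (RtoC (-2 / (1 + sgn sg * p))) (Cdiv (Cconj q) bs)).
  { unfold zz, Rdiv. simpl. pushC. rewrite !(RtoC_inv _ Hu). pushC.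
    replace (RtoC (-2)) with (Copp (Cadd C1 C1)) by (apply Cx_ext; simpl; ring).
    field. split; auto. neqR. }
  rewrite E in D. replace (Csub _ _) with C0 in D by ring.
  assert (Cnorm2 (Cmul (RtoC (-2 / (1 + sgn sg * p))) (Cdiv (Cconj q) bs)) = 0) by (rewrite <- D; unfold Cnorm2; simpl; ring).
  rewrite Cnorm2_mul, Cnorm2_RtoC, Cnorm2_div, Cnorm2_conj in H1 by auto.
  assert (0 < -2 / (1 + sgn sg * p) * (-2 / (1 + sgn sg * p))).
  { assert (-2 / (1 + sgn sg * p) <> 0). { unfold Rdiv. apply Rmult_integral_contrapositive; split; try lra. apply Rinv_neq_0_compat; auto. }
    nra. }
  assert (0 < Cnorm2 q / Cnorm2 bs) by (apply Rdiv_lt_0_compat; auto).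
  nra.
Qed.

Lemma solve2 a b z1 z2 w1 w2 : z1 <> z2 -> Cadd (Cmul a z1) b = w1 -> Cadd (Cmul a z2) b = w2 ->
  a = Cdiv (Csub w1 w2) (Csub z1 z2) /\ b = Csub w1 (Cmul (Cdiv (Csub w1 w2) (Csub z1 z2)) z1).
Proof.
  intros H E1 E2. pose proof (Csub_neq0 _ _ H).
  assert (a = Cdiv (Csub w1 w2) (Csub z1 z2)) by (subst; field; auto).
  split; auto. rewrite <- H1. rewrite <- E1. ring.
Qed.

Lemma Amat_eig sg j p q a1 a2 b x aX bX aY a2Y bY :
  (j = 1 \/ j = 2)%nat -> q <> C0 -> p^2 + Cnorm2 q = 1 ->
  aX^2 + Cnorm2 bX = 1 -> bX <> C0 -> bY <> C0 -> a2Y = - aY ->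
  a1 x = aX -> b x = bX -> a2 (x + 1)%Z = a2Y -> b (x + 1)%Z = bY ->
  Cadd (Cmul (m11 (Amat p q a1 a2 b sg x)) (zz p q sg j aX bX)) (m12 (Amat p q a1 a2 b sg x))
  = Cmul (zz p q sg j aX bX) (zz p q sg j aY bY).
Proof.
  intros Hj Hq Hpq HX HbX HbY Ha2 E1 E2 E3 E4. unfold Amat, alpha, beta; simpl.
  rewrite E1, E2, E3, E4. apply bridge; auto.
Qed.

Lemma alpha_norm p q (bs : Cx) s : q <> C0 ->
  Cnorm2 (Cmul (Cscale (1 + s * p) (expiArg q)) bs) = (1 + s * p) * (1 + s * p) * Cnorm2 bs.
Proof.
  intros Hq. pose proof (Cabs_pos q Hq). pose proof (Cabs_sq q).
  unfold expiArg. rewrite Cnorm2_mul, !Cnorm2_scale. rewrite <- H0. field. lra.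
Qed.

Lemma m12_neq0 p q a1 a2 b sg x : q <> C0 -> p^2 + Cnorm2 q = 1 -> b x <> C0 -> b (x+1)%Z <> C0 ->
  m12 (Amat p q a1 a2 b sg x) <> C0.
Proof.
  intros Hq Hpq H1 H2. pose proof (Cnorm2_pos _ Hq). pose proof (Cnorm2_pos _ H1). pose proof (Cnorm2_pos _ H2).
  unfold Amat, alpha; simpl. apply Cnorm2_pos_neq.
  assert (0 < (1 + sgn sg * p) * (1 + sgn sg * p)) by (destruct sg; simpl; nra).
  assert (0 < (1 + sgn (negb sg) * p) * (1 + sgn (negb sg) * p)) by (destruct sg; simpl; nra).
  assert (Cmul (Cscale (1 + sgn sg * p) (expiArg q)) (b (x + 1)%Z) <> C0).
  { apply Cnorm2_pos_neq. rewrite alpha_norm; auto. nra. }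
  rewrite Cnorm2_div, Cnorm2_conj, !alpha_norm by auto.
  apply Rdiv_lt_0_compat; nra.
Qed.

Lemma phi_left p q a1 a2 b a1L a2L bL sg (Phi : Z -> C2) :
 q <> C0 -> p^2 + Cnorm2 q = 1 -> a1L^2 + Cnorm2 bL = 1 -> bL <> C0 -> a2L = -a1L ->
 (forall x, (x <= 0)%Z -> a1 x = a1L /\ a2 x = a2L /\ b x = bL) ->
 (forall x, Phi (x+1)%Z = M2app (Amat p q a1 a2 b sg x) (Phi x)) ->
 forall m, Phi (- Z.of_nat m)%Z =
   Vm (zz p q sg 1 a1L bL) (zz p q sg 2 a1L bL)
      (fst (M2app (M2inv (Pmat p q sg a1L bL)) (Phi 0%Z)))
      (snd (M2app (M2inv (Pmat p q sg a1L bL)) (Phi 0%Z)))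
      (Cinv (zz p q sg 1 a1L bL)) (Cinv (zz p q sg 2 a1L bL)) m.
Proof.
  intros Hq Hpq HaL HbL Ha2 HL HPhi.
  set (z1 := zz p q sg 1 a1L bL). set (z2 := zz p q sg 2 a1L bL).
  assert (Hz12 : z1 <> z2) by (apply zz_diff; auto).
  assert (Hz1 : z1 <> C0) by (apply Cnorm2_pos_neq, zz_pos; auto).
  assert (Hz2 : z2 <> C0) by (apply Cnorm2_pos_neq, zz_pos; auto).
  pose proof (Csub_neq0 _ _ Hz12) as Hd.
  induction m.
  - change (- Z.of_nat 0)%Z with 0%Z. destruct (Phi 0%Z) as [u v]. unfold M2inv, Pmat, M2det, M2app, Vm.
    cbn [fst snd m11 m12 m21 m22 Cpow]. fold z1 z2.
    assert (Csub (Cmul z1 C1) (Cmul z2 C1) <> C0) by (replace (Csub (Cmul z1 C1) (Cmul z2 C1)) with (Csub z1 z2) by ring; auto).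
    f_equal; field; auto.
  - set (x := (- Z.of_nat (S m))%Z).
    pose proof (HPhi x) as H. replace (x + 1)%Z with (- Z.of_nat m)%Z in H by (unfold x; lia).
    destruct (HL x) as (E1 & E2 & E3); [unfold x; lia|].
    destruct (HL (x+1)%Z) as (E4 & E5 & E6); [unfold x; lia|].
    pose proof (Amat_eig sg 1 p q a1 a2 b x a1L bL a1L a2L bL (or_introl eq_refl) Hq Hpq HaL HbL HbL Ha2 E1 E3 E5 E6) as Q1.
    pose proof (Amat_eig sg 2 p q a1 a2 b x a1L bL a1L a2L bL (or_intror eq_refl) Hq Hpq HaL HbL HbL Ha2 E1 E3 E5 E6) as Q2.
    fold z1 z2 in Q1, Q2.
    destruct (solve2 _ _ _ _ _ _ Hz12 Q1 Q2) as [Ha11 Ha12].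
    assert (Hm12 : m12 (Amat p q a1 a2 b sg x) <> C0).
    { apply m12_neq0; auto. rewrite E3; auto. rewrite E6; auto. }
    rewrite IHm in H. clear IHm. fold x.
    set (k := M2app (M2inv (Pmat p q sg a1L bL)) (Phi 0%Z)) in *.
    destruct (Phi x) as [f g].
    unfold M2app in H.
    pose proof (f_equal fst H) as H1. pose proof (f_equal snd H) as H2. clear H.
    cbn [fst snd m21 m22] in H1, H2. unfold Vm in H1, H2. cbn [fst snd] in H1, H2.
    set (A := Amat p q a1 a2 b sg x) in *.
    assert (Hg : g = Cdiv (Csub (Cadd (Cmul (Cmul (fst k) (Cpow (Cinv z1) m)) z1)
             (Cmul (Cmul (snd k) (Cpow (Cinv z2) m)) z2)) (Cmul (m11 A) f)) (m12 A)).
    { rewrite H1. field. auto. }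
    assert (Hf : f = Cadd (Cmul (fst k) (Cpow (Cinv z1) m)) (Cmul (snd k) (Cpow (Cinv z2) m))).
    { change (m21 A) with C1 in H2. change (m22 A) with C0 in H2. rewrite H2. ring. }
    rewrite Hg. clear Hg. rewrite Hf. unfold Vm. cbn [fst snd Cpow].
    rewrite Ha11, Ha12 in *.
    assert (Csub (Cmul (Cmul z1 z1) (Csub z1 z2)) (Cmul (Csub (Cmul z1 z1) (Cmul z2 z2)) z1) <> C0).
    { replace (Csub (Cmul (Cmul z1 z1) (Csub z1 z2)) (Cmul (Csub (Cmul z1 z1) (Cmul z2 z2)) z1))
        with (Cmul (Cmul z1 z2) (Csub z2 z1)) by ring.
      apply Cmul_neq0; [apply Cmul_neq0|apply Csub_neq0]; auto. }
    f_equal; field; auto.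
Qed.

Lemma neq_helper z1 z2 : z1 <> C0 -> z2 <> C0 -> z1 <> z2 ->
  Csub (Cmul (Cmul z1 z1) (Csub z1 z2)) (Cmul (Csub (Cmul z1 z1) (Cmul z2 z2)) z1) <> C0.
Proof. intros. replace (Csub (Cmul (Cmul z1 z1) (Csub z1 z2)) (Cmul (Csub (Cmul z1 z1) (Cmul z2 z2)) z1))
        with (Cmul (Cmul z1 z2) (Csub z2 z1)) by ring.
      apply Cmul_neq0; [apply Cmul_neq0|apply Csub_neq0]; auto. Qed.

Lemma phi_right p q a1 a2 b a1L a2L bL a1R a2R bR sg (Phi : Z -> C2) :
 q <> C0 -> p^2 + Cnorm2 q = 1 -> a1L^2 + Cnorm2 bL = 1 -> bL <> C0 -> a2L = -a1L ->
 a1R^2 + Cnorm2 bR = 1 -> bR <> C0 -> a2R = -a1R ->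
 (forall x, (x <= 0)%Z -> a1 x = a1L /\ a2 x = a2L /\ b x = bL) ->
 (forall x, (1 <= x)%Z -> a1 x = a1R /\ a2 x = a2R /\ b x = bR) ->
 (forall x, Phi (x+1)%Z = M2app (Amat p q a1 a2 b sg x) (Phi x)) ->
 forall m, Phi (Z.of_nat (S m)) =
   Vm (zz p q sg 1 a1R bR) (zz p q sg 2 a1R bR)
      (Cmul (fst (M2app (M2inv (Pmat p q sg a1L bL)) (Phi 0%Z))) (zz p q sg 1 a1L bL))
      (Cmul (snd (M2app (M2inv (Pmat p q sg a1L bL)) (Phi 0%Z))) (zz p q sg 2 a1L bL))
      (zz p q sg 1 a1R bR) (zz p q sg 2 a1R bR) m.
Proof.
  intros Hq Hpq HaL HbL Ha2L HaR HbR Ha2R HL HR HPhi.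
  pose proof (phi_left p q a1 a2 b a1L a2L bL sg Phi Hq Hpq HaL HbL Ha2L HL HPhi 0) as H0.
  change (- Z.of_nat 0)%Z with 0%Z in H0.
  set (k := M2app (M2inv (Pmat p q sg a1L bL)) (Phi 0%Z)) in *.
  set (z1 := zz p q sg 1 a1L bL) in *. set (z2 := zz p q sg 2 a1L bL) in *.
  set (t1 := zz p q sg 1 a1R bR). set (t2 := zz p q sg 2 a1R bR).
  assert (Hz12 : z1 <> z2) by (apply zz_diff; auto).
  assert (Hz1 : z1 <> C0) by (apply Cnorm2_pos_neq, zz_pos; auto).
  assert (Hz2 : z2 <> C0) by (apply Cnorm2_pos_neq, zz_pos; auto).
  assert (Ht12 : t1 <> t2) by (apply zz_diff; auto).
  assert (Ht1 : t1 <> C0) by (apply Cnorm2_pos_neq, zz_pos; auto).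
  assert (Ht2 : t2 <> C0) by (apply Cnorm2_pos_neq, zz_pos; auto).
  pose proof (Csub_neq0 _ _ Hz12) as Hd. pose proof (Csub_neq0 _ _ Ht12) as Hd'.
  induction m.
  - pose proof (HPhi 0%Z) as H. change (0 + 1)%Z with (Z.of_nat 1) in H.
    destruct (HL 0%Z) as (E1 & E2 & E3); [lia|].
    destruct (HR 1%Z) as (E4 & E5 & E6); [lia|].
    pose proof (Amat_eig sg 1 p q a1 a2 b 0%Z a1L bL a1R a2R bR (or_introl eq_refl) Hq Hpq HaL HbL HbR Ha2R E1 E3 E5 E6) as Q1.
    pose proof (Amat_eig sg 2 p q a1 a2 b 0%Z a1L bL a1R a2R bR (or_intror eq_refl) Hq Hpq HaL HbL HbR Ha2R E1 E3 E5 E6) as Q2.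
    fold z1 z2 t1 t2 in Q1, Q2.
    destruct (solve2 _ _ _ _ _ _ Hz12 Q1 Q2) as [Ha11 Ha12].
    rewrite H, H0. set (A := Amat p q a1 a2 b sg 0%Z) in *.
    unfold M2app, Vm. cbn [fst snd Cpow]. change (m21 A) with C1. change (m22 A) with C0.
    rewrite Ha11, Ha12. f_equal; field; auto.
  - set (x := Z.of_nat (S m)).
    pose proof (HPhi x) as H. replace (x + 1)%Z with (Z.of_nat (S (S m))) in H by (unfold x; lia).
    destruct (HR x) as (E1 & E2 & E3); [unfold x; lia|].
    destruct (HR (x+1)%Z) as (E4 & E5 & E6); [unfold x; lia|].
    pose proof (Amat_eig sg 1 p q a1 a2 b x a1R bR a1R a2R bR (or_introl eq_refl) Hq Hpq HaR HbR HbR Ha2R E1 E3 E5 E6) as Q1.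
    pose proof (Amat_eig sg 2 p q a1 a2 b x a1R bR a1R a2R bR (or_intror eq_refl) Hq Hpq HaR HbR HbR Ha2R E1 E3 E5 E6) as Q2.
    fold t1 t2 in Q1, Q2.
    destruct (solve2 _ _ _ _ _ _ Ht12 Q1 Q2) as [Ha11 Ha12].
    rewrite H. unfold x. rewrite IHm. fold x. set (A := Amat p q a1 a2 b sg x) in *.
    unfold M2app, Vm. cbn [fst snd Cpow]. change (m21 A) with C1. change (m22 A) with C0.
    rewrite Ha11, Ha12. f_equal; field; auto.
Qed.

Lemma bnd_ext f g : (forall m, f m = g m) -> (bnd f <-> bnd g).
Proof. intros H; split; apply bnd_le; intro m; rewrite H; lra. Qed.

Lemma sumN_iff K g h : 0 <= K -> 0 < g -> 0 < h ->
  (summable_N (fun x => K * (g ^ x + h ^ x)) <-> (K = 0 \/ g < 1) /\ (K = 0 \/ h < 1)).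
Proof.
  intros HK Hg Hh. unfold summable_N. fold (bnd (fun m => K * (g ^ S m + h ^ S m))).
  rewrite <- (geomS_bnd K g), <- (geomS_bnd K h) by auto.
  pose proof (fun m => pow_le g (S m) (Rlt_le _ _ Hg)). pose proof (fun m => pow_le h (S m) (Rlt_le _ _ Hh)).
  split.
  - intro H1. split; eapply bnd_le; try apply H1; intro m; simpl; specialize (H m); specialize (H0 m); simpl in *; nra.
  - intros [H1 H2]. eapply bnd_le; [|apply (bnd_add _ _ H1 H2)]. intro; simpl; lra.
Qed.

Lemma part1 p q a1 a2 b a1L a2L bL a1R a2R bR sg (Phi : Z -> C2) :
 q <> C0 -> p^2 + Cnorm2 q = 1 -> a1L^2 + Cnorm2 bL = 1 -> bL <> C0 -> a2L = -a1L ->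
 a1R^2 + Cnorm2 bR = 1 -> bR <> C0 -> a2R = -a1R ->
 (forall x, (x <= 0)%Z -> a1 x = a1L /\ a2 x = a2L /\ b x = bL) ->
 (forall x, (1 <= x)%Z -> a1 x = a1R /\ a2 x = a2R /\ b x = bR) ->
 (forall x, Phi (x+1)%Z = M2app (Amat p q a1 a2 b sg x) (Phi x)) ->
 let k := M2app (M2inv (Pmat p q sg a1L bL)) (Phi 0%Z) in
     (summable_Z (fun x => C2norm2 (Phi x)) <->
      forall j : nat, (j = 1 \/ j = 2)%nat ->
        summable_N (fun x => Cnorm2 (C2comp j k) *
          ((/ Cnorm2 (zz p q sg j a1L bL)) ^ x + (Cnorm2 (zz p q sg j a1R bR)) ^ x))).
Proof.
  intros Hq Hpq HaL HbL Ha2L HaR HbR Ha2R HL HR HPhi k.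
  pose proof (phi_left p q a1 a2 b a1L a2L bL sg Phi Hq Hpq HaL HbL Ha2L HL HPhi) as PL.
  pose proof (phi_right p q a1 a2 b a1L a2L bL a1R a2R bR sg Phi Hq Hpq HaL HbL Ha2L HaR HbR Ha2R HL HR HPhi) as PR.
  fold k in PL, PR.
  set (z1 := zz p q sg 1 a1L bL) in *. set (z2 := zz p q sg 2 a1L bL) in *.
  set (t1 := zz p q sg 1 a1R bR) in *. set (t2 := zz p q sg 2 a1R bR) in *.
  assert (Hz12 : z1 <> z2) by (apply zz_diff; auto).
  assert (Ht12 : t1 <> t2) by (apply zz_diff; auto).
  assert (Pz1 : 0 < Cnorm2 z1) by (apply zz_pos; auto).
  assert (Pz2 : 0 < Cnorm2 z2) by (apply zz_pos; auto).
  assert (Pt1 : 0 < Cnorm2 t1) by (apply zz_pos; auto).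
  assert (Pt2 : 0 < Cnorm2 t2) by (apply zz_pos; auto).
  assert (Hz1 : z1 <> C0) by (apply Cnorm2_pos_neq; auto).
  assert (Hz2 : z2 <> C0) by (apply Cnorm2_pos_neq; auto).
  rewrite summable_Z_iff by (intro; unfold C2norm2; pose proof (Cnorm2_ge0 (fst (Phi x))); pose proof (Cnorm2_ge0 (snd (Phi x))); lra).
  rewrite (bnd_ext _ _ (fun m => f_equal C2norm2 (PL m))).
  rewrite (bnd_ext _ _ (fun m => f_equal C2norm2 (PR m))).
  rewrite !two_modes by auto.
  rewrite !Cnorm2_inv, !Cnorm2_mul by auto.
  pose proof (Cnorm2_ge0 (fst k)) as K1. pose proof (Cnorm2_ge0 (snd k)) as K2.
  rewrite !geom_bnd by (try apply Rlt_le, Rinv_0_lt_compat; try nra; auto).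
  split.
  - intros [[A1 A2] [B1 B2]] j [-> | ->]; cbn [C2comp Nat.eqb]; fold z1 z2 t1 t2;
    rewrite sumN_iff by (auto; apply Rinv_0_lt_compat; auto).
    + split; auto. destruct B1 as [B1|B1]; auto. left. destruct (Rmult_integral _ _ B1); auto; lra.
    + split; auto. destruct B2 as [B2|B2]; auto. left. destruct (Rmult_integral _ _ B2); auto; lra.
  - intros H.
    pose proof (H 1%nat (or_introl eq_refl)) as H1. pose proof (H 2%nat (or_intror eq_refl)) as H2.
    cbn [C2comp Nat.eqb] in H1, H2. fold z1 z2 t1 t2 in H1, H2.
    rewrite sumN_iff in H1, H2 by (auto; apply Rinv_0_lt_compat; auto).
    destruct H1 as [H1a H1b], H2 as [H2a H2b].
    split; split; auto.
    + destruct H1b as [h|h]; auto. left; rewrite h; ring.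
    + destruct H2b as [h|h]; auto. left; rewrite h; ring.
Qed.

Lemma inv_sqrt_lt1 n : 0 < n -> (/ sqrt n < 1 <-> 1 < n).
Proof.
  intros Hn. pose proof (sqrt_lt_R0 n Hn) as Hs. split.
  - intro H. assert (1 < sqrt n).
    { apply (Rmult_lt_reg_l (/ sqrt n)). apply Rinv_0_lt_compat; auto.
      rewrite Rinv_l by lra. lra. }
    rewrite <- sqrt_1 in H0. apply sqrt_lt_0_alt in H0. auto.
  - intro H. assert (1 < sqrt n) by (rewrite <- sqrt_1; apply sqrt_lt_1; lra).
    rewrite <- Rinv_1. apply Rinv_lt_contravar; lra.
Qed.

Lemma sqrt_lt1 n : 0 <= n -> (sqrt n < 1 <-> n < 1).
Proof.
  intros Hn. split.
  - intro H. rewrite <- sqrt_1 in H. apply sqrt_lt_0_alt in H. auto.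
  - intro H. rewrite <- sqrt_1. apply sqrt_lt_1; lra.
Qed.

Lemma cmp_lemma n W E : 0 < W -> n * W = E -> (1 < n <-> W < E) /\ (n < 1 <-> E < W).
Proof. intros HW H. subst E. split; split; intro.
  - pose proof (Rmult_lt_compat_r W 1 n HW H). lra.
  - destruct (Rlt_le_dec 1 n) as [h|h]; auto. pose proof (Rmult_le_compat_r W n 1 (Rlt_le _ _ HW) h). lra.
  - pose proof (Rmult_lt_compat_r W n 1 HW H). lra.
  - destruct (Rlt_le_dec n 1) as [h|h]; auto. pose proof (Rmult_le_compat_r W 1 n (Rlt_le _ _ HW) h). lra.
Qed.

Lemma zz_cmp p q sg j a bs : p ^ 2 + Cnorm2 q = 1 -> q <> C0 -> a ^ 2 + Cnorm2 bs = 1 -> bs <> C0 ->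
  let F := (1 - sgn sg * p) * (((-1) ^ j + sgn sg * a) * ((-1) ^ j + sgn sg * a)) - (1 + sgn sg * p) * (1 - a ^ 2) in
  (1 < Cnorm2 (zz p q sg j a bs) <-> 0 < F) /\ (Cnorm2 (zz p q sg j a bs) < 1 <-> F < 0).
Proof.
  intros Hpq Hq Ha Hb F. pose proof (Cnorm2_pos _ Hb). pose proof (Cnorm2_pos _ Hq).
  assert (Hu : 0 < 1 + sgn sg * p) by (destruct sg; simpl; nra).
  assert (HD : 0 < 1 - a ^ 2) by lra.
  assert (E : Cnorm2 (zz p q sg j a bs) * ((1 + sgn sg * p) * (1 - a ^ 2)) =
     (1 - sgn sg * p) * (((-1) ^ j + sgn sg * a) * ((-1) ^ j + sgn sg * a))).
  { rewrite zz_norm; [|auto|auto|lra]. replace (Cnorm2 bs) with (1 - a^2) by lra.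
    replace (1 - p ^ 2) with ((1 - sgn sg * p) * (1 + sgn sg * p)) by (destruct sg; simpl; ring).
    field. lra. }
  destruct (cmp_lemma _ _ _ (Rmult_lt_0_compat _ _ Hu HD) E) as [C1' C2'].
  rewrite C1', C2'. unfold F. split; split; intro; lra.
Qed.

Lemma part2 p q aL bL aR bR sg j (PL PR : R -> Prop) :
  p ^ 2 + Cnorm2 q = 1 -> q <> C0 -> aL ^ 2 + Cnorm2 bL = 1 -> bL <> C0 ->
  aR ^ 2 + Cnorm2 bR = 1 -> bR <> C0 -> (j = 1 \/ j = 2)%nat ->
  (forall a, a ^ 2 < 1 ->
    (0 < (1 - sgn sg * p) * (((-1) ^ j + sgn sg * a) * ((-1) ^ j + sgn sg * a)) - (1 + sgn sg * p) * (1 - a ^ 2) <-> PL a) /\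
    ((1 - sgn sg * p) * (((-1) ^ j + sgn sg * a) * ((-1) ^ j + sgn sg * a)) - (1 + sgn sg * p) * (1 - a ^ 2) < 0 <-> PR a)) ->
  ((/ Cabs (zz p q sg j aL bL) < 1 /\ Cabs (zz p q sg j aR bR) < 1) <-> (PL aL /\ PR aR)).
Proof.
  intros Hpq Hq HL HbL HR HbR Hj Hs.
  pose proof (Cnorm2_pos _ HbL). pose proof (Cnorm2_pos _ HbR).
  unfold Cabs. rewrite inv_sqrt_lt1 by (apply zz_pos; auto).
  rewrite sqrt_lt1 by apply Cnorm2_ge0.
  destruct (zz_cmp p q sg j aL bL) as [A _]; auto.
  destruct (zz_cmp p q sg j aR bR) as [_ B]; auto.
  rewrite A, B. destruct (Hs aL) as [EL _]; [lra|]. destruct (Hs aR) as [_ ER]; [lra|].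
  rewrite EL, ER. tauto.
Qed.

Lemma sgn_aux (c y : R) : 0 < c -> (0 < c * y <-> 0 < y) /\ (c * y < 0 <-> y < 0).
Proof. intros. split; split; intro; nra.
  Qed.

Lemma part2_all p q aL bL aR bR :
  p ^ 2 + Cnorm2 q = 1 -> q <> C0 -> aL ^ 2 + Cnorm2 bL = 1 -> bL <> C0 ->
  aR ^ 2 + Cnorm2 bR = 1 -> bR <> C0 ->
  ((/ Cabs (zz p q true 1 aL bL) < 1 /\ Cabs (zz p q true 1 aR bR) < 1)
     <-> (aL < - p /\ - p < aR))
  /\
  ((/ Cabs (zz p q true 2 aL bL) < 1 /\ Cabs (zz p q true 2 aR bR) < 1)
     <-> (aR < p /\ p < aL))
  /\
  ((/ Cabs (zz p q false 1 aL bL) < 1 /\ Cabs (zz p q false 1 aR bR) < 1)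
     <-> (aR < - p /\ - p < aL))
  /\
  ((/ Cabs (zz p q false 2 aL bL) < 1 /\ Cabs (zz p q false 2 aR bR) < 1)
     <-> (aL < p /\ p < aR)).
Proof.
  intros Hpq Hq HL HbL HR HbR.
  split; [|split; [|split]].
  - rewrite (part2 p q aL bL aR bR true 1 (fun a => a < -p) (fun a => -p < a)); auto; [tauto|].
    intros a Ha. simpl. replace ((1 - 1 * p) * ((-1 * 1 + 1 * a) * (-1 * 1 + 1 * a)) - (1 + 1 * p) * (1 - a * (a * 1)))
      with (2 * (1 - a) * (- p - a)) by ring.
    destruct (sgn_aux (2 * (1 - a)) (-p - a)) as [X Y]; [nra|]. rewrite X, Y. split; split; intro; lra.
  - rewrite (part2 p q aL bL aR bR true 2 (fun a => p < a) (fun a => a < p)); auto; [tauto|].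
    intros a Ha. simpl. replace ((1 - 1 * p) * ((-1 * (-1 * 1) + 1 * a) * (-1 * (-1 * 1) + 1 * a)) - (1 + 1 * p) * (1 - a * (a * 1)))
      with (2 * (1 + a) * (a - p)) by ring.
    destruct (sgn_aux (2 * (1 + a)) (a - p)) as [X Y]; [nra|]. rewrite X, Y. split; split; intro; lra.
  - rewrite (part2 p q aL bL aR bR false 1 (fun a => -p < a) (fun a => a < -p)); auto; [tauto|].
    intros a Ha. simpl. replace ((1 - -1 * p) * ((-1 * 1 + -1 * a) * (-1 * 1 + -1 * a)) - (1 + -1 * p) * (1 - a * (a * 1)))
      with (2 * (1 + a) * (a + p)) by ring.
    destruct (sgn_aux (2 * (1 + a)) (a + p)) as [X Y]; [nra|]. rewrite X, Y. split; split; intro; lra.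
  - rewrite (part2 p q aL bL aR bR false 2 (fun a => a < p) (fun a => p < a)); auto; [tauto|].
    intros a Ha. simpl. replace ((1 - -1 * p) * ((-1 * (-1 * 1) + -1 * a) * (-1 * (-1 * 1) + -1 * a)) - (1 + -1 * p) * (1 - a * (a * 1)))
      with (2 * (1 - a) * (p - a)) by ring.
    destruct (sgn_aux (2 * (1 - a)) (p - a)) as [X Y]; [nra|]. rewrite X, Y. split; split; intro; lra.
Qed.

Lemma Csub_eq0 a b : Csub a b = C0 -> a = b.
Proof. intro H. replace a with (Cadd (Csub a b) b) by ring. rewrite H. ring. Qed.

Lemma Cx_dec z : z = C0 \/ z <> C0.
Proof. destruct (Req_dec (Re z) 0), (Req_dec (Im z) 0).
  - left; apply Cx_ext; auto.
  - right; intro E; subst; simpl in *; lra.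
  - right; intro E; subst; simpl in *; lra.
  - right; intro E; subst; simpl in *; lra. Qed.

Lemma Cnorm2_opp z : Cnorm2 (Copp z) = Cnorm2 z.
Proof. unfold Cnorm2; simpl; ring. Qed.

Lemma Cnorm2_expi q : q <> C0 -> Cnorm2 (expiArg q) = 1.
Proof. intro Hq. pose proof (Cabs_pos q Hq). pose proof (Cabs_sq q).
  unfold expiArg. rewrite Cnorm2_scale. rewrite <- H0. field. lra. Qed.

Definition Aop p q (b : Z -> Cx) sg x := Cmul (Cscale (1 + sgn sg * p) (expiArg q)) (b (x+1)%Z).
Definition Cop p q (b : Z -> Cx) sg x := Cmul (Cscale (1 - sgn sg * p) (Cconj (expiArg q))) (Cconj (b x)).
Definition Bop q (a1 a2 : Z -> R) sg x := RtoC (sgn sg * Cabs q * (a2 (x+1)%Z - a1 x)).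
Definition Wr (psi1 psi2 : Z -> Cx) x := Csub (Cmul (psi1 x) (psi2 (x+1)%Z)) (Cmul (psi1 (x+1)%Z) (psi2 x)).

Lemma rec_form p q a1 a2 b sg psi x : m2iQ p q a1 a2 b sg psi x = C0 ->
  Cmul (Aop p q b sg x) (psi (x+1)%Z) = Csub (Cmul (Cop p q b sg x) (psi (x-1)%Z)) (Cmul (Bop q a1 a2 sg x) (psi x)).
Proof.
  intro H. unfold m2iQ in H. rewrite (Cscale_eq _ (psi x)) in H.
  apply Csub_eq0. rewrite <- H. unfold Aop, Cop, Bop. ring.
Qed.

Lemma m2iQ_lin p q a1 a2 b sg psi1 psi2 c1 c2 x :
  m2iQ p q a1 a2 b sg (fun y => Cadd (Cmul c1 (psi1 y)) (Cmul c2 (psi2 y))) x =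
  Cadd (Cmul c1 (m2iQ p q a1 a2 b sg psi1 x)) (Cmul c2 (m2iQ p q a1 a2 b sg psi2 x)).
Proof. unfold m2iQ. rewrite !Cscale_eq. ring. Qed.

Lemma wr_rel p q a1 a2 b sg psi1 psi2 x :
  m2iQ p q a1 a2 b sg psi1 x = C0 -> m2iQ p q a1 a2 b sg psi2 x = C0 ->
  Cmul (Aop p q b sg x) (Wr psi1 psi2 x) = Copp (Cmul (Cop p q b sg x) (Wr psi1 psi2 (x-1)%Z)).
Proof.
  intros H1 H2. apply rec_form in H1. apply rec_form in H2.
  unfold Wr. replace (x - 1 + 1)%Z with x by lia.
  replace (Cmul (Aop p q b sg x) (Csub (Cmul (psi1 x) (psi2 (x + 1)%Z)) (Cmul (psi1 (x + 1)%Z) (psi2 x))))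
    with (Csub (Cmul (psi1 x) (Cmul (Aop p q b sg x) (psi2 (x + 1)%Z))) (Cmul (Cmul (Aop p q b sg x) (psi1 (x + 1)%Z)) (psi2 x))) by ring.
  rewrite H1, H2. ring.
Qed.

Lemma Aop_norm p q b sg x : q <> C0 -> Cnorm2 (Aop p q b sg x) = (1 + sgn sg * p) * (1 + sgn sg * p) * Cnorm2 (b (x+1)%Z).
Proof. intro Hq. unfold Aop. rewrite Cnorm2_mul, Cnorm2_scale, Cnorm2_expi by auto. ring. Qed.
Lemma Cop_norm p q b sg x : q <> C0 -> Cnorm2 (Cop p q b sg x) = (1 - sgn sg * p) * (1 - sgn sg * p) * Cnorm2 (b x).
Proof. intro Hq. unfold Cop. rewrite Cnorm2_mul, Cnorm2_scale, !Cnorm2_conj, Cnorm2_expi by auto. ring. Qed.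

Lemma d_rel p q a1 a2 b sg psi1 psi2 x : q <> C0 ->
  m2iQ p q a1 a2 b sg psi1 x = C0 -> m2iQ p q a1 a2 b sg psi2 x = C0 ->
  (1 + sgn sg * p) * (1 + sgn sg * p) * Cnorm2 (b (x+1)%Z) * Cnorm2 (Wr psi1 psi2 x) =
  (1 - sgn sg * p) * (1 - sgn sg * p) * Cnorm2 (b x) * Cnorm2 (Wr psi1 psi2 (x-1)%Z).
Proof.
  intros Hq H1 H2. pose proof (wr_rel _ _ _ _ _ _ _ _ x H1 H2) as E.
  apply (f_equal Cnorm2) in E. rewrite Cnorm2_opp, !Cnorm2_mul, Aop_norm, Cop_norm in E by auto. lra.
Qed.

Lemma term_le_sum (g : nat -> R) n : (forall m, 0 <= g m) -> g n <= sum_f_R0 g n.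
Proof. intro H. destruct n. simpl; lra. rewrite tech5. pose proof (sum_nonneg g n H). lra. Qed.

Lemma summable_pt (f : Z -> R) : (forall x, 0 <= f x) -> summable_Z f -> exists M, forall x, f x <= M.
Proof.
  intros Hf Hs. apply summable_Z_iff in Hs; auto. destruct Hs as [[M1 H1] [M2 H2]].
  exists (M1 + M2). intro x. pose proof (Hf x).
  destruct (Z_le_gt_dec x 0).
  - assert (x = - Z.of_nat (Z.to_nat (- x)))%Z as E by lia.
    specialize (H1 (Z.to_nat (-x))). pose proof (term_le_sum (fun m => f (- Z.of_nat m)%Z) (Z.to_nat (-x)) (fun m => Hf _)) as T.
    cbv beta in T. rewrite <- E in T. assert (0 <= M2) by (specialize (H2 0%nat); simpl in H2; pose proof (Hf 1%Z); lra). lra.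
  - assert (x = Z.of_nat (S (Z.to_nat (x - 1))))%Z as E by lia.
    specialize (H2 (Z.to_nat (x - 1))). pose proof (term_le_sum (fun m => f (Z.of_nat (S m))) (Z.to_nat (x - 1)) (fun m => Hf _)) as T.
    cbv beta in T. rewrite <- E in T. assert (0 <= M1) by (specialize (H1 0%nat); simpl in H1; pose proof (Hf 0%Z); lra). lra.
Qed.

Lemma bnd_shift g : (forall m, 0 <= g m) -> bnd g -> bnd (fun m => g (S m)).
Proof. intros H [M HM]. exists M. intro n. specialize (HM (S n)).
  rewrite decomp_sum in HM by lia. simpl Init.Nat.pred in HM. specialize (H 0%nat). lra. Qed.

Lemma Cmul_eq0_r a z : a <> C0 -> Cmul a z = C0 -> z = C0.
Proof. intros Ha H. replace z with (Cmul (Cinv a) (Cmul a z)) by (field; auto). rewrite H. ring. Qed.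

Lemma uniq_rec p q a1 a2 b sg (phi : Z -> Cx) :
  (forall x, m2iQ p q a1 a2 b sg phi x = C0) ->
  (forall x, Aop p q b sg x <> C0) -> (forall x, Cop p q b sg x <> C0) ->
  phi 0%Z = C0 -> phi 1%Z = C0 -> forall x, phi x = C0.
Proof.
  intros H HA HC H0 H1.
  assert (F : forall n, phi (Z.of_nat n) = C0 /\ phi (Z.of_nat (S n)) = C0).
  { induction n as [|n [IH1 IH2]]; [split; auto|]. split; auto.
    pose proof (rec_form _ _ _ _ _ _ _ _ (H (Z.of_nat (S n)))) as R.
    replace (Z.of_nat (S n) - 1)%Z with (Z.of_nat n) in R by lia.
    replace (Z.of_nat (S n) + 1)%Z with (Z.of_nat (S (S n))) in R by lia.
    rewrite IH1, IH2 in R. apply (Cmul_eq0_r (Aop p q b sg (Z.of_nat (S n)))); auto. rewrite R. ring. }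
  assert (B : forall n, phi (- Z.of_nat n)%Z = C0 /\ phi (- Z.of_nat n + 1)%Z = C0).
  { induction n as [|n [IH1 IH2]]; [split; auto|]. split.
    - pose proof (rec_form _ _ _ _ _ _ _ _ (H (- Z.of_nat n)%Z)) as R.
      replace (- Z.of_nat n - 1)%Z with (- Z.of_nat (S n))%Z in R by lia.
      rewrite IH1, IH2 in R. apply (Cmul_eq0_r (Cop p q b sg (- Z.of_nat n)%Z)); auto.
      set (Y := Cmul (Cop p q b sg (- Z.of_nat n)%Z) (phi (- Z.of_nat (S n))%Z)) in *.
      replace Y with (Cadd (Csub Y (Cmul (Bop q a1 a2 sg (- Z.of_nat n)%Z) C0)) (Cmul (Bop q a1 a2 sg (- Z.of_nat n)%Z) C0)) by ring.
      rewrite <- R. ring.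
    - replace (- Z.of_nat (S n) + 1)%Z with (- Z.of_nat n)%Z by lia. auto. }
  intro x. destruct (Z_le_gt_dec x 0).
  - replace x with (- Z.of_nat (Z.to_nat (-x)))%Z by lia. apply B.
  - replace x with (Z.of_nat (Z.to_nat x)) by lia. apply F.
Qed.

Lemma Wr_bound (psi1 psi2 : Z -> Cx) M1 M2 x :
  (forall y, Cnorm2 (psi1 y) <= M1) -> (forall y, Cnorm2 (psi2 y) <= M2) ->
  Cnorm2 (Wr psi1 psi2 x) <= 2 * M2 * Cnorm2 (psi1 x) + 2 * M1 * Cnorm2 (psi2 x).
Proof.
  intros H1 H2. unfold Wr. eapply Rle_trans; [apply Cnorm2_sub_le|]. rewrite !Cnorm2_mul.
  pose proof (H1 (x+1)%Z). pose proof (H2 (x+1)%Z).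
  pose proof (Cnorm2_ge0 (psi1 x)). pose proof (Cnorm2_ge0 (psi2 x)).
  pose proof (Cnorm2_ge0 (psi1 (x+1)%Z)). pose proof (Cnorm2_ge0 (psi2 (x+1)%Z)).
  nra.
Qed.

Lemma part3 p q a1 a2 b bL bR sg :
  q <> C0 -> p ^ 2 + Cnorm2 q = 1 ->
  (forall x, (x <= 0)%Z -> b x = bL) -> (forall x, (1 <= x)%Z -> b x = bR) ->
  bL <> C0 -> bR <> C0 -> dim_ker_le1 (Qeps p q a1 a2 b sg).
Proof.
  intros Hq Hpq HbL HbR NL NR psi1 psi2 L1 L2 Q1 Q2.
  assert (Hh : Cscale (/ 2) Ci <> C0) by (intro E; apply (f_equal Im) in E; simpl in E; lra).
  assert (K1 : forall x, m2iQ p q a1 a2 b sg psi1 x = C0).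
  { intro x. specialize (Q1 x). unfold Qeps in Q1. apply (Cmul_eq0_r _ _ Hh Q1). }
  assert (K2 : forall x, m2iQ p q a1 a2 b sg psi2 x = C0).
  { intro x. specialize (Q2 x). unfold Qeps in Q2. apply (Cmul_eq0_r _ _ Hh Q2). }
  pose proof (Cnorm2_pos _ Hq) as Pq.
  set (u := 1 + sgn sg * p). set (v := 1 - sgn sg * p).
  assert (Hu : 0 < u) by (unfold u; destruct sg; simpl; nra).
  assert (Hv : 0 < v) by (unfold v; destruct sg; simpl; nra).
  assert (Hb : forall x, 0 < Cnorm2 (b x)).
  { intro x. destruct (Z_le_gt_dec x 0). rewrite HbL by lia. apply Cnorm2_pos; auto.
    rewrite HbR by lia. apply Cnorm2_pos; auto. }
  assert (HA : forall x, Aop p q b sg x <> C0).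
  { intro x. apply Cnorm2_pos_neq. rewrite Aop_norm by auto. apply Rmult_lt_0_compat; [apply Rmult_lt_0_compat|]; auto. }
  assert (HC : forall x, Cop p q b sg x <> C0).
  { intro x. apply Cnorm2_pos_neq. rewrite Cop_norm by auto. apply Rmult_lt_0_compat; [apply Rmult_lt_0_compat|]; auto. }
  assert (W0 : Wr psi1 psi2 0%Z = C0).
  { destruct (Cx_dec (Wr psi1 psi2 0%Z)) as [h|h]; auto. exfalso.
    pose proof (Cnorm2_pos _ h) as Pd.
    set (d := fun x => Cnorm2 (Wr psi1 psi2 x)) in *.
    assert (DR : forall x, u * u * Cnorm2 (b (x+1)%Z) * d x = v * v * Cnorm2 (b x) * d (x-1)%Z).
    { intro x. apply (d_rel p q a1 a2 b sg); auto. }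
    assert (N1 : forall x, 0 <= Cnorm2 (psi1 x)) by (intro; apply Cnorm2_ge0).
    assert (N2 : forall x, 0 <= Cnorm2 (psi2 x)) by (intro; apply Cnorm2_ge0).
    destruct (summable_pt _ N1 L1) as [M1 B1]. destruct (summable_pt _ N2 L2) as [M2 B2].
    assert (M1p : 0 <= M1) by (specialize (B1 0%Z); specialize (N1 0%Z); lra).
    assert (M2p : 0 <= M2) by (specialize (B2 0%Z); specialize (N2 0%Z); lra).
    assert (WB : forall x, d x <= 2 * M2 * Cnorm2 (psi1 x) + 2 * M1 * Cnorm2 (psi2 x)).
    { intro x. apply Wr_bound; auto. }
    apply summable_Z_iff in L1; auto. apply summable_Z_iff in L2; auto.
    destruct L1 as [L1l L1r], L2 as [L2l L2r].
    destruct (Rle_lt_dec (u * u) (v * v)) as [Cuv|Cuv].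
    - assert (G : forall n, Cnorm2 (Wr psi1 psi2 0%Z) <= d (Z.of_nat n)).
      { induction n. simpl. unfold d. lra.
        specialize (DR (Z.of_nat (S n))).
        replace (Z.of_nat (S n) - 1)%Z with (Z.of_nat n) in DR by lia.
        rewrite (HbR (Z.of_nat (S n) + 1)%Z), (HbR (Z.of_nat (S n))) in DR by lia.
        pose proof (Cnorm2_pos _ NR) as PR.
        assert (0 <= d (Z.of_nat (S n))) by apply Cnorm2_ge0.
        assert (u * u * Cnorm2 bR * d (Z.of_nat n) <= u * u * Cnorm2 bR * d (Z.of_nat (S n))).
        { rewrite DR. apply Rmult_le_compat_r; [lra|]. apply Rmult_le_compat_r; lra. }
        assert (d (Z.of_nat n) <= d (Z.of_nat (S n))).
        { apply (Rmult_le_reg_l (u * u * Cnorm2 bR)); [|lra]. apply Rmult_lt_0_compat; nra. }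
        lra. }
      assert (Bd : bnd (fun m => Cnorm2 (Wr psi1 psi2 0%Z) * 1 ^ m)).
      { apply (bnd_le _ (fun m => 2 * M2 * Cnorm2 (psi1 (Z.of_nat (S m))) + 2 * M1 * Cnorm2 (psi2 (Z.of_nat (S m))))).
        - intro m. rewrite pow1. specialize (G (S m)). specialize (WB (Z.of_nat (S m))). lra.
        - apply bnd_add; apply bnd_scal; auto; lra. }
      apply geom_bnd in Bd; [|lra|lra]. destruct Bd; lra.
    - assert (P1 : 0 < d (-1)%Z).
      { specialize (DR 0%Z). simpl in DR.
        pose proof (Hb 0%Z). pose proof (Hb 1%Z).
        assert (0 < u * u * Cnorm2 (b 1%Z) * d 0%Z) by (unfold d; apply Rmult_lt_0_compat; [apply Rmult_lt_0_compat|]; nra).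
        assert (0 <= d (-1)%Z) by apply Cnorm2_ge0.
        destruct H2 as [h'|h']; auto. rewrite <- h' in DR. lra. }
      assert (G : forall n, d (-1)%Z <= d (- Z.of_nat (S n))%Z).
      { induction n. simpl. lra.
        specialize (DR (- Z.of_nat (S n))%Z).
        replace (- Z.of_nat (S n) - 1)%Z with (- Z.of_nat (S (S n)))%Z in DR by lia.
        rewrite (HbL (- Z.of_nat (S n) + 1)%Z), (HbL (- Z.of_nat (S n))%Z) in DR by lia.
        pose proof (Cnorm2_pos _ NL) as PL.
        assert (0 <= d (- Z.of_nat (S (S n)))%Z) by apply Cnorm2_ge0.
        assert (0 <= d (- Z.of_nat (S n))%Z) by apply Cnorm2_ge0.
        assert (v * v * Cnorm2 bL * d (- Z.of_nat (S n))%Z <= v * v * Cnorm2 bL * d (- Z.of_nat (S (S n)))%Z).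
        { rewrite <- DR. apply Rmult_le_compat_r; [lra|]. apply Rmult_le_compat_r; lra. }
        assert (d (- Z.of_nat (S n))%Z <= d (- Z.of_nat (S (S n)))%Z).
        { apply (Rmult_le_reg_l (v * v * Cnorm2 bL)); [|lra]. apply Rmult_lt_0_compat; nra. }
        lra. }
      assert (Bd : bnd (fun m => d (-1)%Z * 1 ^ m)).
      { apply (bnd_le _ (fun m => 2 * M2 * Cnorm2 (psi1 (- Z.of_nat (S m))%Z) + 2 * M1 * Cnorm2 (psi2 (- Z.of_nat (S m))%Z))).
        - intro m. rewrite pow1. specialize (G m). specialize (WB (- Z.of_nat (S m))%Z). lra.
        - apply bnd_add; apply bnd_scal; try lra.
          + apply (bnd_shift (fun m => Cnorm2 (psi1 (- Z.of_nat m)%Z))); auto.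
          + apply (bnd_shift (fun m => Cnorm2 (psi2 (- Z.of_nat m)%Z))); auto. }
      apply geom_bnd in Bd; [|lra|lra]. destruct Bd; lra. }
  unfold Wr in W0. simpl in W0.
  set (u1 := psi1 0%Z) in *. set (u2 := psi2 0%Z) in *. set (v1 := psi1 1%Z) in *. set (v2 := psi2 1%Z) in *.
  assert (Hc : exists c1 c2, (c1 <> C0 \/ c2 <> C0) /\ Cadd (Cmul c1 u1) (Cmul c2 u2) = C0 /\ Cadd (Cmul c1 v1) (Cmul c2 v2) = C0).
  { destruct (Cx_dec u2) as [e2|e2]; [destruct (Cx_dec u1) as [e1|e1]|].
    - destruct (Cx_dec v2) as [f2|f2]; [destruct (Cx_dec v1) as [f1|f1]|].
      + exists C1, C0. split. left; apply C1_neq_C0. rewrite e1, e2, f1, f2. split; ring.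
      + exists v2, (Copp v1). split. right. intro E. apply f1. replace v1 with (Copp (Copp v1)) by ring. rewrite E. ring.
        rewrite e1, e2. split; ring.
      + exists v2, (Copp v1). split. left; auto. rewrite e1, e2. split; ring.
    - exists u2, (Copp u1). split. right. intro E. apply e1. replace u1 with (Copp (Copp u1)) by ring. rewrite E. ring.
      split. ring. replace (Cadd (Cmul u2 v1) (Cmul (Copp u1) v2)) with (Copp (Csub (Cmul u1 v2) (Cmul v1 u2))) by ring.
      rewrite W0. ring.
    - exists u2, (Copp u1). split. left; auto.
      split. ring. replace (Cadd (Cmul u2 v1) (Cmul (Copp u1) v2)) with (Copp (Csub (Cmul u1 v2) (Cmul v1 u2))) by ring.
      rewrite W0. ring. }
  destruct Hc as (c1 & c2 & Hnz & E0 & E1).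
  exists c1, c2. split; auto.
  apply (uniq_rec p q a1 a2 b sg (fun y => Cadd (Cmul c1 (psi1 y)) (Cmul c2 (psi2 y)))); auto.
  intro x. rewrite m2iQ_lin, K1, K2. ring.
Qed.

Theorem corollary4p13
  (p : R) (q : Cx) (a1 a2 : Z -> R) (b : Z -> Cx)
  (a1L a2L a1R a2R : R) (bL bR : Cx)
  (* split-step SUSYQW parameters *)
  (Hq : q <> C0) (Hpq : p ^ 2 + Cnorm2 q = 1)
  (Hunit1 : forall x, a1 x ^ 2 + Cnorm2 (b x) = 1)
  (Hunit2 : forall x, a2 x ^ 2 + Cnorm2 (b x) = 1)
  (Hsum : forall x, Cmul (b x) (RtoC (a1 x + a2 x)) = C0)
  (* two-phase coin *)
  (HL : forall x, (x <= 0)%Z -> a1 x = a1L /\ a2 x = a2L /\ b x = bL)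
  (HR : forall x, (1 <= x)%Z -> a1 x = a1R /\ a2 x = a2R /\ b x = bR)
  (* nontrivial limits Cx(L), Cx(R), i.e. not +-I *)
  (HntL : ~ (a1L = 1 /\ a2L = 1 /\ bL = C0) /\ ~ (a1L = -1 /\ a2L = -1 /\ bL = C0))
  (HntR : ~ (a1R = 1 /\ a2R = 1 /\ bR = C0) /\ ~ (a1R = -1 /\ a2R = -1 /\ bR = C0))
  (* Type III *)
  (HbL : bL <> C0) (HbR : bR <> C0) :
  (* a(L) := a1L, a(R) := a1R *)
  (forall (sg : bool) (Phi : Z -> C2),
     (forall x, Phi (x + 1)%Z = M2app (Amat p q a1 a2 b sg x) (Phi x)) ->
     let k := M2app (M2inv (Pmat p q sg a1L bL)) (Phi 0%Z) in
     (summable_Z (fun x => C2norm2 (Phi x)) <->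
      forall j : nat, (j = 1 \/ j = 2)%nat ->
        summable_N (fun x => Cnorm2 (C2comp j k) *
          ((/ Cnorm2 (zz p q sg j a1L bL)) ^ x + (Cnorm2 (zz p q sg j a1R bR)) ^ x))))
  /\
  ((/ Cabs (zz p q true 1 a1L bL) < 1 /\ Cabs (zz p q true 1 a1R bR) < 1)
     <-> (a1L < - p /\ - p < a1R))
  /\
  ((/ Cabs (zz p q true 2 a1L bL) < 1 /\ Cabs (zz p q true 2 a1R bR) < 1)
     <-> (a1R < p /\ p < a1L))
  /\
  ((/ Cabs (zz p q false 1 a1L bL) < 1 /\ Cabs (zz p q false 1 a1R bR) < 1)
     <-> (a1R < - p /\ - p < a1L))
  /\
  ((/ Cabs (zz p q false 2 a1L bL) < 1 /\ Cabs (zz p q false 2 a1R bR) < 1)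
     <-> (a1L < p /\ p < a1R))
  /\
  (forall sg : bool, dim_ker_le1 (Qeps p q a1 a2 b sg)).

Proof.
  assert (HL0 := HL 0%Z ltac:(lia)). assert (HR1 := HR 1%Z ltac:(lia)).
  destruct HL0 as (E1 & E2 & E3). destruct HR1 as (F1 & F2 & F3).
  assert (HaL : a1L ^ 2 + Cnorm2 bL = 1) by (rewrite <- E1, <- E3; apply Hunit1).
  assert (HaR : a1R ^ 2 + Cnorm2 bR = 1) by (rewrite <- F1, <- F3; apply Hunit1).
  assert (Ha2L : a2L = - a1L).
  { pose proof (Hsum 0%Z) as S. rewrite E1, E2, E3 in S. apply Cmul_eq0_r in S; auto.
    apply (f_equal Re) in S. simpl in S. lra. }
  assert (Ha2R : a2R = - a1R).
  { pose proof (Hsum 1%Z) as S. rewrite F1, F2, F3 in S. apply Cmul_eq0_r in S; auto.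
    apply (f_equal Re) in S. simpl in S. lra. }
  destruct (part2_all p q a1L bL a1R bR) as (X1 & X2 & X3 & X4); auto.
  split; [|split; [exact X1|split; [exact X2|split; [exact X3|split; [exact X4|]]]]].
  - intros sg Phi HPhi. apply (part1 p q a1 a2 b a1L a2L bL a1R a2R bR sg Phi); auto.
  - intro sg. apply (part3 p q a1 a2 b bL bR sg); auto.
    + intros x Hx. apply (HL x Hx).
    + intros x Hx. apply (HR x Hx).
Qed.
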